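(* Let $V$ be a finite-dimensional real vector space with filtration $V=V_1\supseteq\cdots\supseteq V_r\supseteq V_{r+1}=\{0\}$, and let $V=\bigoplus_{i=1}^r m_i$ and $V=\bigoplus_{i=1}^r m_i'$ be two decompositions with $V_i=m_i\oplus V_{i+1}=m_i'\oplus V_{i+1}$ for each $i$, with associated dilation groups $(\delta_t)_{t>0}$ and $(\delta_t')_{t>0}$. Let $\phi:V\to V$ be the linear isomorphism whose restriction to each $m_i$ is the projection of $m_i$ onto $m_i'$ along $V_{i+1}$ (so that $\delta'_t=\phi\circ\delta_t\circ\phi^{-1}$). If $|\cdot|'$ is a quasi-norm homogeneous with respect to $(\delta'_t)$, then there is a unique quasi-norm $|\cdot|$ homogeneous with respect to $(\delta_t)$ such that $|x|-|x|'=o(|x|)$ as $|x|\to\infty$; moreover $|x|=|\phi(x)|'$.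
   Context: The dilation group associated to a decomposition $V=\bigoplus m_i$ with $V_i=m_i\oplus V_{i+1}$ is the one-parameter group of linear maps with $\delta_t(x)=t^ix$ for $x\in m_i$. A (homogeneous) quasi-norm associated to $(\delta_t)$ is a continuous function $|\cdot|:V\to[0,\infty)$ such that $|x|=0$ iff $x=0$, and $|\delta_t(x)|=t|x|$ for all $t>0$, $x\in V$. *)

(* Defs.v *)
From HB Require Import structures.
From mathcomp Require Import all_boot all_order all_algebra.
From mathcomp Require Import all_classical all_reals all_analysis.
Set Implicit Arguments. Unset Strict Implicit. Unset Printing Implicit Defensive.
Import Order.TTheory GRing.Theory Num.Theory.
Import numFieldNormedType.Exports.
Local Open Scope ring_scope.

Definition adapted_decomp (R : realType) (n r : nat)
  (F m : nat -> {vspace 'rV[R]_n}) : Prop :=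
  [/\ F 1%N = fullv, F r.+1 = 0%VS &
      forall i, (1 <= i <= r)%N ->
        (m i + F i.+1)%VS = F i /\ (m i :&: F i.+1)%VS = 0%VS].

Definition is_dilation (R : realType) (n r : nat)
  (m : nat -> {vspace 'rV[R]_n}) (delta : R -> 'rV[R]_n -> 'rV[R]_n) : Prop :=
  forall t, 0 < t ->
    (forall (a : R) x y, delta t (a *: x + y) = a *: delta t x + delta t y) /\
    (forall i x, (1 <= i <= r)%N -> x \in m i -> delta t x = t ^+ i *: x).

Definition quasi_norm (R : realType) (n : nat)
  (delta : R -> 'rV[R]_n -> 'rV[R]_n) (N : 'rV[R]_n -> R) : Prop :=
  [/\ continuous (N : 'rV[R]_n -> R),
      forall x, 0 <= N x,
      forall x, N x = 0 <-> x = 0 &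
      forall t x, 0 < t -> N (delta t x) = t * N x].

Definition little_o_at_infty (R : realType) (n : nat) (N N' : 'rV[R]_n -> R) : Prop :=
  forall eps : R, 0 < eps -> exists M : R, forall x,
    M < N x -> `|N x - N' x| <= eps * N x.

(* Main.v *)
Require Import Defs.
From HB Require Import structures.
From mathcomp Require Import all_boot all_order all_algebra.
From mathcomp Require Import all_classical all_reals all_analysis.
From mathcomp Require Import zify ring lra.
Import Order.TTheory GRing.Theory Num.Theory.
Import numFieldNormedType.Exports.
Local Open Scope ring_scope.
Set Implicit Arguments. Unset Strict Implicit.
Definition lin (R : realType) n (f : 'rV[R]_n -> 'rV[R]_n) :=
  forall (a : R) x y, f (a *: x + y) = a *: f x + f y.

Arguments lin {R n}.
Section Lin.
Variables (R : realType) (n : nat) (f : 'rV[R]_n -> 'rV[R]_n).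
Hypothesis hf : lin f.
Lemma lin0 : f 0 = 0.
Proof.
have h := hf 1 0 0; rewrite !scale1r addr0 in h.
have : f 0 + f 0 - f 0 = f 0 - f 0 by rewrite -h.
by rewrite addrK subrr.
Qed.
Lemma linD x y : f (x + y) = f x + f y.
Proof. by have := hf 1 x y; rewrite !scale1r. Qed.
Lemma linZ a x : f (a *: x) = a *: f x.
Proof. by have := hf a x 0; rewrite !addr0 lin0 addr0. Qed.
Lemma linN x : f (- x) = - f x.
Proof. by rewrite -scaleN1r linZ scaleN1r. Qed.
Lemma linB x y : f (x - y) = f x - f y.
Proof. by rewrite linD linN. Qed.
End Lin.

Lemma down_ind (r : nat) (P : nat -> Prop) :
  P r.+1 -> (forall k, (1 <= k <= r)%N -> P k.+1 -> P k) ->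
  forall k, (1 <= k <= r.+1)%N -> P k.
Proof.
move=> Pr IH k /andP[k1 kr].
have -> : k = (r.+1 - (r.+1 - k))%N by rewrite subKn.
have : (r.+1 - k < r.+1)%N by rewrite ltn_subrL; lia.
elim: (r.+1 - k)%N => [|d IHd] hd; first by rewrite subn0.
have -> : (r.+1 - d.+1 = (r.+1 - d.+1).+1.-1)%N by [].
apply: IH; first lia.
have -> : ((r.+1 - d.+1).+1 = r.+1 - d)%N by lia.
by apply: IHd; lia.
Qed.

Section Decomp.
Variables (R : realType) (n r : nat) (F m : nat -> {vspace 'rV[R]_n}).
Hypothesis HF : adapted_decomp r F m.

Lemma F_dec {i} : (1 <= i <= r)%N -> (F i.+1 <= F i)%VS.
Proof. by case: HF => _ _ H /H [<- _]; exact: addvSr. Qed.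

Lemma F_mono i j : (1 <= i <= j)%N -> (j <= r.+1)%N -> (F j <= F i)%VS.
Proof.
move=> /andP[i1 ij]; elim: j ij => [|j IH]; first lia.
rewrite leq_eqVlt => /orP[/eqP <- _|ij jr]; first exact: subvv.
have hj : (1 <= j <= r)%N by lia.
have h1 : (i <= j)%N by lia.
have h2 : (j <= r.+1)%N by lia.
exact: (subv_trans (F_dec hj) (IH h1 h2)).
Qed.

Lemma F_last x : x \in F r.+1 -> x = 0.
Proof. by case: HF => _ -> _; rewrite memv0 => /eqP. Qed.

Lemma F_first x : x \in F 1%N.
Proof. by case: HF => -> _ _; exact: memvf. Qed.

Lemma decomp i x : (1 <= i <= r)%N -> x \in F i ->
  exists2 a, a \in m i & x - a \in F i.+1.
Proof.
case: HF => _ _ H /H [<- _] /memv_addP [a ha [b hb ->]].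
by exists a => //; rewrite addrC addKr.
Qed.
End Decomp.
Lemma grp4 (V : zmodType) (a X Y b : V) : a + X + Y - (a + b) = X + (Y - b).
Proof.
by rewrite opprD (addrC (-a)) -!addrA (addrCA a) (addrCA a) (addrCA a) subrr addr0.
Qed.
Section Ind.
Variables (R : realType) (n r : nat) (F m : nat -> {vspace 'rV[R]_n}).
Hypothesis HF : adapted_decomp r F m.

Lemma F_indk (P : nat -> 'rV[R]_n -> Prop) :
  (P r.+1 0) ->
  (forall k a b, (1 <= k <= r)%N -> a \in m k -> b \in F k.+1 -> P k.+1 b -> P k (a + b)) ->
  forall k x, (1 <= k <= r.+1)%N -> x \in F k -> P k x.
Proof.
move=> P0 IH k x hk; move: k hk x; apply: down_ind.
  by move=> x /(F_last HF) ->.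
move=> k hk IHk x /(decomp HF hk) [a ha hb].
have -> : x = a + (x - a) by rewrite addrC subrK.
by apply: IH => //; apply: IHk.
Qed.

Lemma F_ind (P : 'rV[R]_n -> Prop) :
  P 0 ->
  (forall k a b, (1 <= k <= r)%N -> a \in m k -> b \in F k.+1 -> P b -> P (a + b)) ->
  forall x, P x.
Proof.
move=> P0 IH x.
apply: (@F_indk (fun _ => P) P0 _ 1%N x) => //.
by case: HF => -> _ _; exact: memvf.
Qed.
End Ind.

Section Dil.
Variables (R : realType) (n r : nat) (F m : nat -> {vspace 'rV[R]_n}).
Variable delta : R -> 'rV[R]_n -> 'rV[R]_n.
Hypothesis HF : adapted_decomp r F m.
Hypothesis Hd : is_dilation r m delta.

Lemma dil_lin t : 0 < t -> lin (delta t).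
Proof. by move=> /Hd []. Qed.

Lemma dil_m t i x : 0 < t -> (1 <= i <= r)%N -> x \in m i -> delta t x = t ^+ i *: x.
Proof. by move=> /Hd [] _ H; exact: H. Qed.

Lemma dil_comp a b x : 0 < a -> 0 < b -> delta a (delta b x) = delta (a * b) x.
Proof.
move=> a0 b0; move: x; apply: (F_ind HF).
  by rewrite !lin0 //; apply: dil_lin => //; rewrite mulr_gt0.
move=> k u v hk hu hv IH.
have ab0 : 0 < a * b by rewrite mulr_gt0.
rewrite !linD; try exact: dil_lin.
by rewrite IH !(dil_m _ hk hu) // linZ ?(dil_m _ hk hu) ?scalerA ?exprMn 1?mulrC //; exact: dil_lin.
Qed.

Lemma dil1 x : delta 1 x = x.
Proof.
move: x; apply: (F_ind HF); first by rewrite lin0 //; apply: dil_lin.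
move=> k u v hk hu hv IH.
by rewrite linD ?IH ?(dil_m _ hk hu) ?expr1n ?scale1r //; apply: dil_lin.
Qed.

Lemma dil_inv t x : 0 < t -> delta t (delta t^-1 x) = x.
Proof. by move=> t0; rewrite dil_comp ?invr_gt0 // mulrV ?unitfE ?gt_eqF // dil1. Qed.

Lemma dil_inv' t x : 0 < t -> delta t^-1 (delta t x) = x.
Proof. by move=> t0; rewrite dil_comp ?invr_gt0 // mulVr ?unitfE ?gt_eqF // dil1. Qed.
End Dil.
Section Phi.
Variables (R : realType) (n r : nat) (F m m' : nat -> {vspace 'rV[R]_n}).
Variables (delta delta' : R -> 'rV[R]_n -> 'rV[R]_n) (phi : 'rV[R]_n -> 'rV[R]_n).
Hypothesis HF : adapted_decomp r F m.
Hypothesis HF' : adapted_decomp r F m'.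
Hypothesis Hd : is_dilation r m delta.
Hypothesis Hd' : is_dilation r m' delta'.
Hypothesis Hphi : lin phi.
Hypothesis Hpm : forall i x, (1 <= i <= r)%N -> x \in m i ->
     phi x \in m' i /\ phi x - x \in F i.+1.

Lemma phi_unip k x : (1 <= k <= r.+1)%N -> x \in F k -> phi x - x \in F k.+1.
Proof.
apply: (F_indk HF (P := fun k x => phi x - x \in F k.+1)).
  by rewrite lin0 // subr0 mem0v.
move=> {}k a b hk ha hb IH.
have -> : phi (a + b) - (a + b) = (phi a - a) + (phi b - b).
  by rewrite (linD Hphi) opprD addrACA.
apply: memvD; first exact: (Hpm hk ha).2.
have [kr|kr] := ltnP k r.
  have : (F k.+2 <= F k.+1)%VS by apply: (F_mono HF); lia.
  by move/subvP; apply.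
have -> : b = 0 by apply: (F_last HF); have -> : r = k by lia.
by rewrite lin0 // subr0 mem0v.
Qed.

Lemma phi_inj_F k : (1 <= k <= r.+1)%N -> forall x, x \in F k -> phi x = 0 -> x = 0.
Proof.
move: k; apply: down_ind; first by move=> x /(F_last HF).
move=> k hk IH x hx px; apply: IH => //.
have := phi_unip (_ : (1 <= k <= r.+1)%N) hx; rewrite px sub0r memvN; apply; lia.
Qed.

Lemma phi_inj : injective phi.
Proof.
move=> x y h; apply/eqP; rewrite -subr_eq0; apply/eqP.
apply: (phi_inj_F (k := 1%N)) => //; first exact: (F_first HF (x - y)).
by rewrite (linB Hphi) h subrr.
Qed.

Lemma phi_surj k : (1 <= k <= r.+1)%N -> forall y, y \in F k -> exists2 x, x \in F k & phi x = y.
Proof.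
move: k; apply: down_ind.
  by move=> y /(F_last HF) ->; exists 0; rewrite ?mem0v ?lin0.
move=> k hk IH y hy.
have hk' : (1 <= k <= r.+1)%N by lia.
have [w hw pw] := IH _ (phi_unip hk' hy).
exists (y - w); last by rewrite linB // pw opprB addrC subrK.
apply: memvB => //; have : (F k.+1 <= F k)%VS by apply: (F_mono HF); lia.
by move/subvP; apply.
Qed.

Definition psi y := xget 0 [set x | phi x = y].

Lemma psiK y : phi (psi y) = y.
Proof.
apply: (@xgetPex _ 0 [set x | phi x = y]).
have [x _ hx] := phi_surj (k := 1%N) (erefl _) (F_first HF y); by exists x.
Qed.

Lemma psi_phi x : psi (phi x) = x.
Proof. by apply: phi_inj; rewrite psiK. Qed.

Lemma psi_lin : lin psi.
Proof. by move=> a x y; apply: phi_inj; rewrite Hphi !psiK. Qed.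

Lemma psi_unip k y : (1 <= k <= r.+1)%N -> y \in F k -> psi y - y \in F k.+1.
Proof.
move=> hk hy; have [x hx <-] := phi_surj hk hy.
by rewrite psi_phi -opprB memvN; apply: phi_unip.
Qed.

Lemma phi_comm t x : 0 < t -> phi (delta t x) = delta' t (phi x).
Proof.
move=> t0; move: x; apply: (F_ind HF).
  by rewrite (lin0 (dil_lin Hd t0)) (lin0 Hphi) (lin0 (dil_lin Hd' t0)).
move=> k a b hk ha hb IH.
have [pa _] := Hpm hk ha.
rewrite (linD (dil_lin Hd t0)) !(linD Hphi) (linD (dil_lin Hd' t0)).
by rewrite IH (dil_m Hd t0 hk ha) (dil_m Hd' t0 hk pa) (linZ Hphi).
Qed.
End Phi.
Section Analysis.
Variables (R : realType) (n : nat).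
Local Notation V := 'rV[R]_n.

Lemma coord_le (v : V) j : `|v 0 j| <= `|v|.
Proof.
have /mapP[k Hk ->] : `|v ord0 j| \in [seq `|v x.1 x.2| | x : 'I_1 * 'I_n].
  by apply/mapP; exists (ord0, j) => //=; rewrite mem_enum.
by rewrite [leRHS]/Num.norm /= mx_normrE; apply/bigmax_geP; right => /=; exists k.
Qed.

Lemma lin_bounded (f : V -> V) : lin f -> exists2 C, 0 <= C & forall v, `|f v| <= C * `|v|.
Proof.
move=> hf; exists (\sum_(j < n) `|f (delta_mx 0 j)|); first by apply: sumr_ge0.
move=> v; rewrite {1}[v]row_sum_delta (big_morph f (linD hf) (lin0 hf)).
apply: (le_trans (ler_norm_sum _ _ _)); rewrite mulr_suml.
apply: ler_sum => j _; rewrite (linZ hf) normrZ mulrC.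
by apply: ler_wpM2l => //; exact: coord_le.
Qed.

Lemma lin_cont (f : V -> V) : lin f -> continuous f.
Proof.
move=> hf; have [C C0 hC] := lin_bounded hf.
move=> x; apply/(cvgrPdist_lt (FF := nbhs_filter x)) => e e0.
apply/nbhs_ballP; exists (e / (C + 1)); first by rewrite /= divr_gt0 // ltr_wpDl.
move=> y; rewrite -ball_normE /ball_ /= => hy.
rewrite -(linB hf); apply: (le_lt_trans (hC _)).
have C1 : 0 < C + 1 by rewrite ltr_wpDl.
apply: (le_lt_trans (ler_wpM2r _ (_ : C <= C + 1))) => //; first by rewrite lerDl.
by rewrite -ltr_pdivlMl // mulrC.
Qed.
End Analysis.
Section DilBound.
Variables (R : realType) (n r : nat) (F m : nat -> {vspace 'rV[R]_n}).
Variable delta : R -> 'rV[R]_n -> 'rV[R]_n.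
Hypothesis HF : adapted_decomp r F m.
Hypothesis Hd : is_dilation r m delta.

Lemma proj_bound k : (1 <= k <= r)%N -> exists2 P : R, 0 <= P &
  forall u, u \in F k -> exists2 a, a \in m k & u - a \in F k.+1 /\ `|a| <= P * `|u|.
Proof.
move=> hk; case: HF => _ _ /(_ k hk) [hsum hcap].
set pi := daddv_pi (m k) (F k.+1).
have hl : lin (fun x => pi x) by move=> a x y; rewrite linearP.
have [P P0 hP] := lin_bounded hl.
exists P => // u hu; exists (pi u); first exact: memv_pi.
split; last exact: hP.
have := daddv_pi_add hcap; rewrite hsum => /(_ u hu) h.
by rewrite -{1}h addrC addKr memv_pi.
Qed.

Lemma dil_bound_small k : (1 <= k <= r.+1)%N -> exists2 D : R, 0 <= D &
  forall u s, u \in F k -> 0 < s -> s <= 1 -> `|delta s u| <= s ^+ k * D * `|u|.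
Proof.
move: k; apply: down_ind.
  exists 0 => // u s /(F_last HF) -> s0 _.
  by rewrite (lin0 (dil_lin Hd s0)) normr0 !mulr0.
move=> k hk [D D0 hD].
have [P P0 hP] := proj_bound hk.
exists (P + D * (1 + P)); first by rewrite addr_ge0 // mulr_ge0 // addr_ge0.
move=> u s hu s0 s1.
have [a ha [hb haP]] := hP u hu.
have hu' : u = a + (u - a) by rewrite addrC subrK.
rewrite {1}hu' (linD (dil_lin Hd s0)) (dil_m Hd s0 hk ha).
have hb' := hD _ _ hb s0 s1.
have hbn : `|u - a| <= `|u| + `|a| by apply: (le_trans (ler_normB _ _)).
apply: (le_trans (ler_normD _ _)); rewrite normrZ ger0_norm; last by rewrite exprn_ge0 // ltW.
set S := s ^+ k in hb' *.
have S0 : 0 <= S by rewrite exprn_ge0 ?ltW.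
rewrite exprS in hb'.
set U := `|u| in hbn haP *; set A := `|a| in hbn haP *; set B := `|u - a| in hbn hb' *.
have A0 : 0 <= A by apply: normr_ge0.
have B0 : 0 <= B by apply: normr_ge0.
have e1 : S * A <= S * (P * U) by apply: ler_wpM2l.
have e2 : s * S * D * B <= S * D * B.
  by rewrite -!mulrA; apply: ler_piMl => //; rewrite !mulr_ge0.
have e3 : S * D * B <= S * D * (U + P * U).
  apply: ler_wpM2l; first by rewrite mulr_ge0.
  by apply: (le_trans hbn); rewrite lerD2l.
rewrite -/S in hb'.
have -> : S * (P + D * (1 + P)) * U = S * (P * U) + S * D * (U + P * U) by ring.
apply: lerD => //; apply: (le_trans hb'); apply: (le_trans e2 e3).
Qed.

Lemma dil_bound_large k : (1 <= k <= r.+1)%N -> exists2 E : R, 0 <= E &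
  forall u t, u \in F k -> 1 <= t -> `|delta t u| <= t ^+ r * E * `|u|.
Proof.
move: k; apply: down_ind.
  exists 0 => // u t /(F_last HF) -> t1.
  have t0 : 0 < t by apply: lt_le_trans t1.
  by rewrite (lin0 (dil_lin Hd t0)) normr0 !mulr0.
move=> k hk [E E0 hE].
have [P P0 hP] := proj_bound hk.
exists (P + E * (1 + P)); first by rewrite addr_ge0 // mulr_ge0 // addr_ge0.
move=> u t hu t1.
have t0 : 0 < t by apply: lt_le_trans t1.
have [a ha [hb haP]] := hP u hu.
have hu' : u = a + (u - a) by rewrite addrC subrK.
rewrite {1}hu' (linD (dil_lin Hd t0)) (dil_m Hd t0 hk ha).
have hb' := hE _ _ hb t1.
have hbn : `|u - a| <= `|u| + `|a| by apply: (le_trans (ler_normB _ _)).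
apply: (le_trans (ler_normD _ _)); rewrite normrZ ger0_norm; last by rewrite exprn_ge0 // ltW.
have tk : t ^+ k <= t ^+ r by apply: ler_weXn2l => //; case/andP: hk.
set S := t ^+ r in hb' tk *.
have S0 : 0 <= S by rewrite exprn_ge0 ?ltW.
set U := `|u| in hbn haP *; set A := `|a| in hbn haP *; set B := `|u - a| in hbn hb' *.
have A0 : 0 <= A by apply: normr_ge0.
have B0 : 0 <= B by apply: normr_ge0.
have e0 : t ^+ k * A <= S * A by apply: ler_wpM2r.
have e1 : S * A <= S * (P * U) by apply: ler_wpM2l.
have e3 : S * E * B <= S * E * (U + P * U).
  apply: ler_wpM2l; first by rewrite mulr_ge0.
  by apply: (le_trans hbn); rewrite lerD2l.
have -> : S * (P + E * (1 + P)) * U = S * (P * U) + S * E * (U + P * U) by ring.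
apply: lerD; first exact: le_trans e0 e1.
exact: le_trans hb' e3.
Qed.
End DilBound.
Section Conj.
Variables (R : realType) (n r : nat) (F m : nat -> {vspace 'rV[R]_n}).
Variable delta : R -> 'rV[R]_n -> 'rV[R]_n.
Variable g : 'rV[R]_n -> 'rV[R]_n.
Hypothesis HF : adapted_decomp r F m.
Hypothesis Hd : is_dilation r m delta.
Hypothesis Hg : lin g.
Hypothesis Hgu : forall k y, (1 <= k <= r.+1)%N -> y \in F k -> g y - y \in F k.+1.

Lemma m_sub_F k : (1 <= k <= r)%N -> (m k <= F k)%VS.
Proof. by case: HF => _ _ /(_ k) H /H [<- _]; exact: addvSl. Qed.

Lemma conj_bound k : (1 <= k <= r.+1)%N -> exists2 D : R, 0 <= D &
  forall u s, u \in F k -> 0 < s -> s <= 1 ->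
    `|delta s (g (delta s^-1 u)) - u| <= s * D * `|u|.
Proof.
have [G G0 hG] := lin_bounded Hg.
move: k; apply: down_ind.
  exists 0 => // u s /(F_last HF) -> s0 _.
  have si0 : 0 < s^-1 by rewrite invr_gt0.
  by rewrite (lin0 (dil_lin Hd si0)) (lin0 Hg) (lin0 (dil_lin Hd s0)) subr0 normr0 !mulr0.
move=> k hk [D2 D20 hD2].
have [P P0 hP] := proj_bound HF hk.
have hk1 : (1 <= k.+1 <= r.+1)%N by lia.
have [D1 D10 hD1] := dil_bound_small HF Hd hk1.
exists (D1 * (G + 1) * P + D2 * (1 + P)).
  by rewrite addr_ge0 // !mulr_ge0 // addr_ge0.
move=> u s hu s0 s1.
have si0 : 0 < s^-1 by rewrite invr_gt0.
have [a ha [hb haP]] := hP u hu.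
set b := u - a in hb haP *.
have hu' : u = a + b by rewrite /b addrC subrK.
have haF : a \in F k by move: ha; apply/subvP; apply: m_sub_F.
have hga : g a - a \in F k.+1 by apply: Hgu => //; lia.
have -> : delta s (g (delta s^-1 u)) - u =
    s^-k *: delta s (g a - a) + (delta s (g (delta s^-1 b)) - b).
  rewrite {1}hu' (linD (dil_lin Hd si0)) (dil_m Hd si0 hk ha) exprVn Hg (dil_lin Hd s0).
  have hgd : delta s (g a) = s ^+ k *: a + delta s (g a - a).
    by rewrite -(dil_m Hd s0 hk ha) -(linD (dil_lin Hd s0)) addrC subrK.
  rewrite hgd scalerDr scalerA mulVf.
    by rewrite scale1r hu' grp4.
  by rewrite expf_neq0 // gt_eqF.
apply: (le_trans (ler_normD _ _)); rewrite normrZ ger0_norm; last by rewrite invr_ge0 exprn_ge0 // ltW.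
have hw := hD1 _ _ hga s0 s1.
have hz := hD2 _ _ hb s0 s1.
have hgan : `|g a - a| <= (G + 1) * (P * `|u|).
  apply: (le_trans (ler_normB _ _)).
  apply: (@le_trans _ _ ((G + 1) * `|a|)).
    by rewrite mulrDl mul1r lerD2r.
  by apply: ler_wpM2l => //; rewrite addr_ge0.
have hbn : `|b| <= `|u| + P * `|u|.
  by apply: (le_trans (ler_normB _ _)); rewrite lerD2l.
set U := `|u| in hgan hbn haP *.
set W := `|delta s (g a - a)| in hw *.
set Z := `|delta s (g (delta s^-1 b)) - b| in hz *.
have U0 : 0 <= U by apply: normr_ge0.
have sk : s ^-k * s ^+ k.+1 = s.
  by rewrite exprS mulrCA mulVf ?mulr1 // expf_neq0 // gt_eqF.
have e1 : s ^- k * W <= s * (D1 * ((G + 1) * (P * U))).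
  apply: (le_trans (ler_wpM2l _ hw)); first by rewrite invr_ge0 exprn_ge0 // ltW.
  rewrite !mulrA sk -!mulrA; apply: ler_wpM2l; first exact: ltW.
  by apply: ler_wpM2l.
have e2 : Z <= s * (D2 * (U + P * U)).
  apply: (le_trans hz); rewrite -mulrA; apply: ler_wpM2l; first exact: ltW.
  by apply: ler_wpM2l.
have -> : s * (D1 * (G + 1) * P + D2 * (1 + P)) * U =
  s * (D1 * ((G + 1) * (P * U))) + s * (D2 * (U + P * U)) by ring.
exact: lerD.
Qed.
End Conj.
Section Unif.
Variables (R : realType) (n : nat).
Local Notation V := 'rV[R]_n.

Lemma unif_cont (f : V -> R) (K : set V) : compact K -> continuous f ->
  forall e, 0 < e -> exists2 d, 0 < d &
    forall u w, K u -> `|w - u| < d -> `|f w - f u| < e.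
Proof.
move=> cK cf e e0.
have := (iffLR (compact_near_coveringP K)) cK nat eventually
  (fun i u => forall w, `|w - u| < i.+1%:R^-1 -> `|f w - f u| < e) _.
case.
- move=> x Kx.
  have := cf x; move/(cvgrPdist_lt (FF := nbhs_filter x)) => /(_ (e / 2)).
  have e20 : 0 < e / 2 by rewrite divr_gt0.
  move=> /(_ e20) /nbhs_ballP [rho rho0 hrho].
  have rho20 : 0 < rho / 2 by rewrite divr_gt0.
  exists (ball x (rho / 2), (fun i : nat => (i.+1%:R^-1 < rho / 2 : Prop))) => /=.
    split; first exact: nbhsx_ballx.
    exact: (near_infty_natSinv_lt (PosNum rho20)).
  case=> x' i /= [hx' hi] w hw.
  rewrite -ball_normE /ball_ /= in hx'.
  have h1 : `|f x - f x'| < e / 2 by apply: hrho; rewrite -ball_normE /ball_ /=; lra.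
  have h2 : `|f x - f w| < e / 2.
    apply: hrho; rewrite -ball_normE /ball_ /=.
    have -> : x - w = (x - x') - (w - x') by rewrite opprB addrA subrK.
    apply: (le_lt_trans (ler_normB _ _)).
    have : `|w - x'| < rho / 2 by apply: lt_trans hw hi.
    move: hx'; lra.
  have -> : f w - f x' = (f x - f x') - (f x - f w) by rewrite opprB [RHS]addrC addrA subrK.
  apply: (le_lt_trans (ler_normB _ _)).
  move: h1 h2; lra.
- move=> N _ hN.
  exists (N.+1%:R^-1); first by rewrite invr_gt0 ltr0Sn.
  by move=> u w Ku hw; apply: (hN N (leqnn N) u Ku).
Qed.
End Unif.
Section QNBound.
Variables (R : realType) (n r : nat) (F m : nat -> {vspace 'rV[R]_n}).
Variable delta : R -> 'rV[R]_n -> 'rV[R]_n.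
Variable N : 'rV[R]_n -> R.
Hypothesis HF : adapted_decomp r F m.
Hypothesis Hd : is_dilation r m delta.
Hypothesis HN : quasi_norm delta N.

Lemma annulus_min (l : R) : 0 < l -> exists2 c, 0 < c &
  forall z : 'rV[R]_n, l <= `|z| -> `|z| <= 1 -> c <= N z.
Proof.
move=> l0; case: HN => Nc N0 Neq _.
set A := [set z : 'rV[R]_n | l <= `|z| /\ `|z| <= 1]%classic.
have cA : compact A.
  apply: bounded_closed_compact.
    exists 1; split; first by rewrite num_real.
    by move=> M M1 z [_ hz] /=; apply: le_trans hz (ltW M1).
  have -> : A = (Num.norm @^-1` [set x | l <= x] `&` Num.norm @^-1` [set x : R | x <= 1])%classic.
    by [].
  apply: closedI; apply: preimage_closed; try (by move=> ? _; apply: norm_continuous).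
    exact: closed_ge.
  exact: closed_le.
have [[z0 Az0]|A0] := pselect (A !=set0)%classic.
  have [c hc hmin] := @EVT_min_rV R n N A (ex_intro _ z0 Az0) cA (continuous_subspaceT Nc).
  exists (N c).
    rewrite lt_def N0 andbT; apply/eqP => /Neq c0.
    move: hc; rewrite inE /A /= c0 normr0 => -[].
    by move=> h _; move: (lt_le_trans l0 h); rewrite ltxx.
  by move=> z h1 h2; apply: hmin; rewrite inE.
exists 1 => // z h1 h2; exfalso; apply: A0; by exists z.
Qed.

Lemma qn_bounded : exists2 B, 0 <= B & forall u, N u <= 1 -> `|u| <= B.
Proof.
have h1 : (1 <= 1 <= r.+1)%N by [].
have [D D0 hD] := dil_bound_small HF Hd h1.
have [E E0 hE] := dil_bound_large HF Hd h1.
set sg := (2 * D + 2)^-1.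
have sg0 : 0 < sg by rewrite invr_gt0; lra.
have sg1 : sg <= 1 by rewrite invf_le1; lra.
have sgD : sg * D <= 2^-1.
  rewrite /sg ler_pdivrMl; last lra.
  rewrite ler_pdivlMr; lra.
set l := sg ^+ r / (E + 1).
have E10 : 0 < E + 1 by lra.
have l0 : 0 < l by rewrite divr_gt0 // exprn_gt0.
have low : forall z, l * `|z| <= `|delta sg z|.
  move=> z.
  have sgi : 1 <= sg^-1 by rewrite invf_ge1.
  have := hE (delta sg z) _ (F_first HF _) sgi.
  rewrite (dil_inv' HF Hd) // => hz.
  have Y0 : 0 <= `|delta sg z| by [].
  have e1 : sg^-1 ^+ r * E * `|delta sg z| <= sg^-1 ^+ r * (E + 1) * `|delta sg z|.
    apply: ler_wpM2r => //; apply: ler_wpM2l; [by rewrite exprn_ge0 // invr_ge0 ltW | lra].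
  have := le_trans hz e1 => hz2.
  have := ler_wpM2l (ltW l0) hz2.
  have -> : l * (sg^-1 ^+ r * (E + 1) * `|delta sg z|) = `|delta sg z|.
    rewrite /l exprVn; field; rewrite gt_eqF //; [lra| by rewrite exprn_gt0].
  done.
have [c c0 hc] := annulus_min l0.
have claim : forall k u, `|u| <= 2 ^+ k -> exists t, [/\ 0 < t, t <= 1,
    `|delta t u| <= 1 & ((`|u| <= 1 /\ t = 1) \/ l <= `|delta t u|)].
  elim=> [|k IH] u hu.
    by exists 1; rewrite (dil1 HF Hd); split => //; left; split; rewrite // -(expr0 2).
  have [u1|u1] := lerP `|u| 1.
    by exists 1; rewrite (dil1 HF Hd); split => //; left.
  set w := delta sg u.
  have hw : `|w| <= 2 ^+ k.
    apply: (le_trans (hD _ _ (F_first HF _) sg0 sg1)); rewrite expr1.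
    have := ler_wpM2r (normr_ge0 u) sgD; move/le_trans; apply.
    move: hu; rewrite exprS; lra.
  have [t [t0 t1 ht hdis]] := IH _ hw.
  exists (t * sg); split.
  - by rewrite mulr_gt0.
  - by rewrite mulr_ile1 // ltW.
  - by rewrite -(dil_comp HF Hd) //.
  - right; rewrite -(dil_comp HF Hd) //.
    case: hdis => [[_ ->]|//]; rewrite (dil1 HF Hd).
    apply: le_trans (low u); rewrite ler_peMr //; exact: ltW.
exists (1 + (c^-1) ^+ r * E).
  by rewrite addr_ge0 // mulr_ge0 // exprn_ge0 // invr_ge0 ltW.
move=> u Nu.
have [u1|u1] := lerP `|u| 1.
  by apply: (le_trans u1); rewrite lerDl mulr_ge0 // exprn_ge0 // invr_ge0 ltW.
set k := (Num.truncn `|u|).+1.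
have hk : `|u| <= 2 ^+ k.
  apply: (ltW (lt_le_trans (truncnS_gt _) _)).
  rewrite -natrX ler_nat; apply: ltnW; exact: ltn_expl.
have [t [t0 t1 ht [[hu _]|hl]]] := claim k u hk.
  by move: hu; rewrite leNgt u1.
case: HN => _ N0 _ Nh.
have ct : c <= t.
  apply: (le_trans (hc _ hl ht)); rewrite Nh //.
  by rewrite -[leRHS]mulr1; apply: ler_wpM2l => //; exact: ltW.
have ti : 1 <= t^-1 by rewrite invf_ge1.
have := hE (delta t u) _ (F_first HF _) ti; rewrite (dil_inv' HF Hd) // => hu.
apply: (le_trans hu); apply: le_trans (_ : (c^-1) ^+ r * E <= _); last by rewrite lerDr.
have tc : t^-1 <= c^-1 by rewrite lef_pV2 ?posrE.
have e1 : t^-1 ^+ r <= c^-1 ^+ r by apply: lerXn2r => //; rewrite nnegrE ltW // invr_gt0.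
rewrite -[leRHS]mulr1; apply: ler_pM => //; first by rewrite mulr_ge0 // exprn_ge0 // ltW // invr_gt0.
by apply: ler_wpM2r.
Qed.
End QNBound.
Unset Implicit Arguments.

Theorem proposition2p6 (R : realType) (n r : nat)
  (F m m' : nat -> {vspace 'rV[R]_n})
  (delta delta' : R -> 'rV[R]_n -> 'rV[R]_n)
  (phi : 'rV[R]_n -> 'rV[R]_n) (N' : 'rV[R]_n -> R) :
  adapted_decomp r F m ->
  adapted_decomp r F m' ->
  is_dilation r m delta ->
  is_dilation r m' delta' ->
  (forall (a : R) x y, phi (a *: x + y) = a *: phi x + phi y) ->
  (forall i x, (1 <= i <= r)%N -> x \in m i ->
     phi x \in m' i /\ phi x - x \in F i.+1) ->
  quasi_norm delta' N' ->
  exists N : 'rV[R]_n -> R,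
    [/\ quasi_norm delta N,
        little_o_at_infty N N',
        (forall x, N x = N' (phi x)) &
        (forall N2, quasi_norm delta N2 -> little_o_at_infty N2 N' -> N2 = N)].
Proof.
move=> HF HF' Hd Hd' Hphi Hpm HN'.
have Hphi' : lin phi by [].
have HN'c := HN'; case: HN'c => Nc N0 Neq Nh.
set N := fun x => N' (phi x).
have qN : quasi_norm delta N.
  split.
  - by move=> x; exact: (continuous_comp (@lin_cont _ _ _ Hphi' x) (@Nc (phi x))).
  - by move=> x; apply: N0.
  - move=> x; rewrite /N Neq; split; last by move=> ->; rewrite (lin0 Hphi').
    by move=> h; apply: (phi_inj HF Hphi' Hpm); rewrite h (lin0 Hphi').
  - by move=> t x t0; rewrite /N (phi_comm HF Hd Hd' Hphi' Hpm) // Nh.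
have lo : little_o_at_infty N N'.
  move=> eps eps0.
  have [B B0 hB] := qn_bounded HF' Hd' HN'.
  set K := [set u : 'rV[R]_n | `|u| <= B]%classic.
  have cK : compact K.
    apply: bounded_closed_compact.
      exists B; split; first by rewrite num_real.
      by move=> M M1 z hz /=; apply: le_trans hz (ltW M1).
    have -> : K = (Num.norm @^-1` [set x : R | x <= B])%classic by [].
    apply: preimage_closed; first by move=> ? _; apply: norm_continuous.
    exact: closed_le.
  have [d d0 hd] := unif_cont cK Nc eps0.
  have h1 : (1 <= 1 <= r.+1)%N by [].
  have [D D0 hD] := conj_bound HF' Hd' (psi_lin HF Hphi' Hpm) (psi_unip HF Hphi' Hpm) h1.
  exists (1 + D * B / d) => x hx.
  set t := N x in hx *.
  have DBd : 0 <= D * B / d by rewrite divr_ge0 // ?mulr_ge0 // ltW.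
  have t1 : 1 < t by apply: le_lt_trans hx; rewrite lerDl.
  have t0 : 0 < t by apply: lt_trans t1.
  set y := phi x.
  set u := delta' t^-1 y.
  have ti0 : 0 < t^-1 by rewrite invr_gt0.
  have Nu : N' u = 1 by rewrite /u Nh // mulVf // gt_eqF.
  have Ku : `|u| <= B by apply: hB; rewrite Nu.
  have ti1 : t^-1 <= 1 by rewrite invf_le1 // ltW.
  have hy : delta' t^-1^-1 u = y by rewrite invrK /u (dil_inv HF' Hd').
  have := hD u t^-1 (F_first HF' _) ti0 ti1; rewrite hy /y (psi_phi HF Hphi' Hpm) => hx'.
  have hdd : `|delta' t^-1 x - u| < d.
    apply: (le_lt_trans hx').
    apply: (@le_lt_trans _ _ (t^-1 * D * B)).
      by rewrite -!mulrA; apply: ler_wpM2l; [exact: ltW | apply: ler_wpM2l].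
    rewrite -mulrA mulrC ltr_pdivrMr //.
    have : d * (1 + D * B / d) < d * t by rewrite ltr_pM2l.
    by rewrite mulrDr mulr1 mulrCA mulfV ?gt_eqF // mulr1; lra.
  have := hd u _ Ku hdd; rewrite Nu Nh //.
  move=> hlt.
  have -> : t - N' x = - (t * (t^-1 * N' x - 1)).
    by rewrite mulrBr mulrA mulfV ?gt_eqF // mul1r mulr1 opprB.
  rewrite normrN normrM ger0_norm ?ltW // mulrC.
  by rewrite ltr_pM2r.
exists N; split => //.
move=> N2 qN2 lo2; apply: boolp.funext => x.
case: (qN2) => _ N20 N2eq N2h; case: (qN) => _ Nn0 Neq0 Nh0.
have [->|x0] := eqVneq x 0.
  by rewrite (proj2 (N2eq 0) erefl) (proj2 (Neq0 0) erefl).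
have a0 : 0 < N2 x by rewrite lt_def N20 andbT; apply/eqP => /N2eq /eqP; rewrite (negbTE x0).
have b0 : 0 < N x by rewrite lt_def Nn0 andbT; apply/eqP => /Neq0 /eqP; rewrite (negbTE x0).
set a := N2 x in a0 *; set b := N x in b0 *.
have key : forall eps, 0 < eps -> `|a - b| <= eps * (a + b).
  move=> eps eps0.
  have [M2 hM2] := lo2 eps eps0; have [M hM] := lo eps eps0.
  set t := 1 + `|M2| / a + `|M| / b.
  have e1 : 0 <= `|M2| / a by rewrite divr_ge0 // ltW.
  have e2 : 0 <= `|M| / b by rewrite divr_ge0 // ltW.
  have t0 : 0 < t by rewrite /t; lra.
  have hta : M2 < N2 (delta t x).
    rewrite N2h // -/a /t !mulrDl mul1r divfK ?gt_eqF //.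
    have := ler_norm M2; have : 0 <= `|M| / b * a by rewrite mulr_ge0 // ltW.
    lra.
  have htb : M < N (delta t x).
    rewrite Nh0 // -/b /t !mulrDl mul1r divfK ?gt_eqF //.
    have := ler_norm M; have : 0 <= `|M2| / a * b by rewrite mulr_ge0 // ltW.
    lra.
  have := hM2 _ hta; have := hM _ htb; rewrite N2h // Nh0 // -/a -/b.
  move=> h1 h2.
  have h3 : `|t * a - t * b| <= eps * (t * a) + eps * (t * b).
    have -> : t * a - t * b = (t * a - N' (delta t x)) - (t * b - N' (delta t x)).
      by rewrite opprB addrA subrK.
    by apply: (le_trans (ler_normB _ _)); apply: lerD.
  move: h3; rewrite -mulrBr normrM (ger0_norm (ltW t0)) => h3.
  have : t * `|a - b| <= t * (eps * (a + b)).
    by apply: (le_trans h3); rewrite le_eqVlt; apply/orP; left; apply/eqP; ring.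
  by rewrite ler_pM2l.
apply/eqP; rewrite -subr_eq0 -normr_eq0; apply/negPn/negP => hg.
have gp : 0 < `|a - b| by rewrite lt_def hg normr_ge0.
have S0 : 0 < a + b by rewrite addr_gt0.
have hp : 0 < `|a - b| / (2 * (a + b)) by rewrite divr_gt0 // mulr_gt0.
have := key _ hp.
have -> : `|a - b| / (2 * (a + b)) * (a + b) = `|a - b| / 2.
  by field; rewrite gt_eqF.
lra.
Qed.
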